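(* Let $G$ be a finite abelian group with $|G|\ge 2$. Then \[ \mathsf{BO}(|G|-1,G)=\begin{cases}|G|-1, & \text{if } \mathsf{r}_2(G)=1,\\ |G|+1, & \text{otherwise.}\end{cases} \]
   Context: Groups are written additively. For a positive integer $k$, a set $\{g_1,\dots,g_k\}$ of $k$ distinct elements of a finite abelian group $G$ is called $k$-barycentric if $\sum_{i=1}^k g_i = k\,g_j$ for some $1\le j\le k$. The $k$-th barycentric Olson constant $\mathsf{BO}(k,G)$ is the smallest integer $\ell$ such that every subset $A\subseteq G$ with $|A|\ge \ell$ contains a $k$-barycentric subset (so that always $\mathsf{BO}(k,G)\le |G|+1$, the condition being vacuous for $\ell>|G|$). Writing $G\cong \mathbb{Z}/n_1\mathbb{Z}\times\cdots\times\mathbb{Z}/n_r\mathbb{Z}$ with $1<n_1\mid\cdots\mid n_r$, the $2$-rank $\mathsf{r}_2(G)$ is the number of indices $i$ with $2\mid n_i$. *)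

(* Defs.v *)
From HB Require Import structures.
From mathcomp Require Import all_boot all_order all_algebra.
Set Implicit Arguments. Unset Strict Implicit. Unset Printing Implicit Defensive.
Import GRing.Theory.
Local Open Scope ring_scope.

(* A finite abelian group, written additively, is a finZmodType. *)

Definition barycentric (G : finZmodType) (k : nat) (B : {set G}) : bool :=
  (#|B| == k)%N && [exists g in B, (\sum_(x in B) x) == g *+ k].

Definition BO_prop (G : finZmodType) (k l : nat) : bool :=
  [forall A : {set G}, (l <= #|A|)%N ==>
     [exists B : {set G}, (B \subset A) && barycentric k B]].

Lemma BO_prop_ex (G : finZmodType) (k : nat) : exists l, BO_prop G k l.
Proof.
exists (#|G|.+1); apply/forallP => A; apply/implyP => HA.
by move: (max_card A); rewrite leqNgt HA.
Qed.

Definition BO (G : finZmodType) (k : nat) : nat := ex_minn (BO_prop_ex G k).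

(* 2-rank: G[2] = {x | 2x = 0} is elementary abelian of order 2^r_2(G). *)
Definition rank2 (G : finZmodType) : nat :=
  logn 2 #|[set x : G | x *+ 2 == 0]|.

(* Main.v *)
Require Import Defs.
From HB Require Import structures.
From mathcomp Require Import all_boot all_order all_algebra.
From mathcomp Require Import zify.
Import GRing.Theory.
Set Implicit Arguments. Unset Strict Implicit.

Lemma pair_sum (G : finZmodType) (f : G -> G) (c : G) (A : {set G}) :
  (forall x, x \in A -> [/\ f x \in A, f (f x) = x, f x != x & (x + f x = c)%R]) ->
  (\sum_(x in A) x = c *+ (#|A|./2))%R /\ ~~ odd #|A|.
Proof.
move: {2}#|A| (leqnn #|A|) => n; elim: n A => [|n IH] A hA H.
  have A0 : A = set0 by apply/cards0_eq; lia.
  by rewrite A0 big_set0 cards0.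
case: (set_0Vmem A) => [->|[x xA]]; first by rewrite big_set0 cards0.
have [fxA ffx fxx sx] := H x xA.
have fxA' : f x \in A :\ x by rewrite !inE fxx.
set A' := A :\ x :\ f x.
have cA : #|A| = (#|A'| + 2)%N.
  by rewrite (cardsD1 x A) xA (cardsD1 (f x) (A :\ x)) fxA' /A'; lia.
have H' : forall y, y \in A' -> [/\ f y \in A', f (f y) = y, f y != y & (y + f y = c)%R].
  move=> y; rewrite !inE => /and3P [yfx yx yA].
  have [fyA ffy fyy sy] := H y yA.
  split => //.
  rewrite fyA andbT; apply/andP; split.
    by apply: contra yx => /eqP e; rewrite -ffy e ffx.
  by apply: contra yfx => /eqP e; rewrite -e ffy.
have [IH1 IH2] := IH A' ltac:(lia) H'.
rewrite (big_setD1 x xA) (big_setD1 (f x) fxA').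
rewrite /= -/A' IH1 addrA sx cA.
split; last by rewrite oddD addbF.
have -> : ((#|A'| + 2)./2 = (#|A'|./2).+1)%N.
  by rewrite addn2 /=.
by rewrite mulrS.
Qed.

Lemma mulrn_card (G : finZmodType) (g : G) : (g *+ #|G| = 0)%R.
Proof.
have := reindex_inj (op := +%R) (x := 0%R) (P := predT) (F := fun x : G => x) (addrI g).
rewrite big_split /= sumr_const cardT -cardE => e.
by apply: (addIr (\sum_i i)%R); rewrite -e add0r.
Qed.

Definition H2 (G : finZmodType) := [set x : G | (x *+ 2 == 0)%R].

Lemma sum_H (G : finZmodType) : (\sum_(x : G) x = \sum_(x in H2 G) x)%R.
Proof.
rewrite (eq_bigl (fun x => x \in [set: G])); last by move=> x; rewrite inE.
rewrite (big_setID (H2 G)) /= setTI setTD.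
have hyp : forall x, x \in ~: H2 G -> [/\ (- x)%R \in ~: H2 G, (- - x = x)%R, (- x != x)%R & (x + - x = 0)%R].
  move=> x; rewrite !inE => hx; split.
  - by rewrite mulNrn oppr_eq0.
  - by rewrite opprK.
  - apply: contra hx => /eqP e; by rewrite mulr2n -{1}e addNr.
  - by rewrite addrN.
have [-> _] := pair_sum hyp.
by rewrite mul0rn addr0.
Qed.

Lemma S_rank (G : finZmodType) : ((\sum_(x : G) x)%R != 0%R) = (rank2 G == 1%N).
Proof.
rewrite sum_H /rank2 -/(H2 G).
have H0 : (0 : G)%R \in H2 G by rewrite inE mul0rn.
case: (set_0Vmem (H2 G :\ 0%R)) => [E|[e]].
  have -> : H2 G = [set 0%R].
    apply/setP => y; rewrite in_set1; apply/idP/idP => [yH|/eqP->//].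
    by apply/negPn/negP => y0; move: (in_set0 y); rewrite -E in_setD1 y0 yH.
  by rewrite big_set1 eqxx cards1 logn1.
rewrite !inE => /andP [e0 eH].
have hyp : forall x, x \in H2 G -> [/\ (x + e)%R \in H2 G, (x + e + e = x)%R, (x + e != x)%R & (x + (x + e) = e)%R].
  move=> x; rewrite !inE => xH; split.
  - by rewrite mulrnDl (eqP xH) (eqP eH) addr0.
  - by rewrite -addrA -mulr2n (eqP eH) addr0.
  - by rewrite -subr_eq0 addrAC subrr add0r.
  - by rewrite addrA -mulr2n (eqP xH) add0r.
have [-> ev] := pair_sum hyp.
set m := (#|H2 G|./2)%N.
have cm : #|H2 G| = (2 * m)%N.
  by rewrite /m -[in LHS](odd_double_half #|H2 G|) (negbTE ev) add0n -mul2n.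
have m0 : (0 < m)%N.
  have : (0 < #|H2 G|)%N by apply/card_gt0P; exists 0%R.
  by rewrite cm; lia.
rewrite cm lognM // logn_prime // eqxx add1n eqSS.
have -> : (e *+ m = e *+ odd m)%R.
  by rewrite -[in LHS](odd_double_half m) mulrnDr -mul2n mulrnA (eqP eH) mul0rn addr0.
rewrite -[logn 2 m == 0]negbK -lt0n logn_gt0 mem_primes /= m0 /= dvdn2 negbK.
by case: (odd m) => /=; rewrite ?e0 ?mulr0n ?eqxx.
Qed.

Lemma bary_iff (G : finZmodType) (B : {set G}) :
  barycentric (#|G| - 1) B = (#|B| == #|G| - 1) && ((\sum_(x : G) x)%R != 0%R).
Proof.
rewrite /barycentric; case cB: (#|B| == #|G| - 1) => //=.
have c1 : #|~: B| == 1.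
  have : 0 < #|G| by apply/card_gt0P; exists 0%R.
  move: (cardsC B); move/eqP: cB => ->; move=> h1 h2.
  by apply/eqP; apply/(@addnI (#|G| - 1)); rewrite h1 addn1 subn1 prednK.
have [a Ea] := cards1P c1.
have EB : B = ~: [set a] by rewrite -Ea setCK.
have hS : (\sum_(x : G) x = a + \sum_(x in B) x)%R.
  rewrite (eq_bigl (fun x => x \in [set: G])); last by move=> x; rewrite inE.
  by rewrite (big_setD1 a (in_setT a)) /= setTD EB.
have neg : forall g : G, (g *+ (#|G| - 1) = - g)%R.
  move=> g; apply/eqP; rewrite -subr_eq0 opprK -mulrSr.
  have -> : (#|G| - 1).+1 = #|G|.
    by rewrite subn1 prednK //; apply/card_gt0P; exists 0%R.
  by rewrite mulrn_card.
have sB : (\sum_(x in B) x = \sum_(x : G) x - a)%R by rewrite hS addrC addKr.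
rewrite sB; apply/existsP/idP.
- case=> g /andP [gB /eqP e]; apply/eqP => S0; move: gB.
  move: e; rewrite S0 sub0r neg => /eqP; rewrite eqr_opp => /eqP <-.
  by rewrite EB !inE eqxx.
- move=> S0; exists (a - \sum_(x : G) x)%R; rewrite neg opprB eqxx andbT.
  rewrite EB !inE; apply: contra S0 => e.
  by move: e; rewrite -subr_eq0 addrC addKr oppr_eq0.
Qed.

Lemma BO_eq (G : finZmodType) k v : BO_prop G k v -> (forall l, BO_prop G k l -> v <= l) -> BO G k = v.
Proof.
move=> h1 h2; rewrite /BO; case: ex_minnP => m Pm Hm.
by apply/eqP; rewrite eqn_leq Hm // h2.
Qed.

Unset Implicit Arguments.
Theorem mainTheorem1 (G : finZmodType) (HG : (2 <= #|G|)%N) :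
  BO G (#|G| - 1) = (if rank2 G == 1%N then (#|G| - 1)%N else (#|G|.+1)%N).
Proof.
rewrite -S_rank.
case S0: ((\sum_(x : G) x)%R != 0%R).
- apply: BO_eq.
  + apply/forallP => A; apply/implyP => hA; apply/existsP.
    have cA : #|A| <= #|G| by apply: max_card.
    case cA1: (#|A| == #|G| - 1).
      by exists A; rewrite subxx bary_iff cA1 S0.
    have [x xA] : exists x, x \in A.
      apply/card_gt0P.
      have aux : forall a b, 2 <= b -> b - 1 <= a -> 0 < a by move=> a b; lia.
      exact: aux HG hA.
    exists (A :\ x); rewrite subsetDl bary_iff S0 andbT.
    move: (cardsD1 x A); rewrite xA => h.
    have aux : forall a b c, a <= b -> b - 1 <= a -> (a == b - 1) = false -> a = true + c -> c == b - 1.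
      move=> a b c; lia.
    exact: aux cA hA cA1 h.
  + move=> l /forallP Hl; rewrite leqNgt; apply/negP => hl.
    have [x x0] : exists x : G, x \in [set~ 0%R].
      by apply/card_gt0P; rewrite cardsC1 -subn1 subn_gt0.
    set A := [set~ 0%R] :\ x.
    have cA : #|A| = #|G| - 2.
      move: (cardsD1 x [set~ 0%R]); rewrite x0 cardsC1 -/A.
      have aux : forall a b, b.-1 = true + a -> a = b - 2 by move=> a b; lia.
      exact: aux.
    have hl2 : l <= #|G| - 2.
      have aux : forall a b, a < b - 1 -> a <= b - 2 by move=> a b; lia.
      exact: aux hl.
    move: (Hl A); rewrite cA hl2.
    move=> /existsP [B /andP [BA]]; rewrite bary_iff => /andP [/eqP cB _].
    move: (subset_leq_card BA); rewrite cB cA.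
    have aux : forall b, 2 <= b -> b - 1 <= b - 2 -> False by move=> b; lia.
    exact: aux HG.
- apply: BO_eq.
  + apply/forallP => A; apply/implyP => hA.
    have aux : forall a b, b.+1 <= a -> a <= b -> False by move=> a b; lia.
    by case: (aux _ _ hA (max_card A)).
  + move=> l /forallP Hl; rewrite leqNgt; apply/negP => hl.
    move: (Hl [set: G]); rewrite cardsT.
    have -> : l <= #|G| by rewrite -ltnS.
    by move=> /existsP [B /andP [_]]; rewrite bary_iff S0 andbF.
Qed.
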